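(* Let $A$ be a row-finite $\omega\times\omega$ complex matrix with infinite deficiency, and let $H=(h_{ij})=QA$ be a quasi-Hermite form of $A$ ($Q$ nonsingular row-finite). Let $j_0<j_1<\cdots$ index the nonzero rows of $H$, $\mu_n=\ell(H_{j_n})$, and $S=\omega\setminus\{\mu_0,\mu_1,\dots\}=\{s_0<s_1<\cdots\}$. For $s\in S$ define $\xi^{(s)}\in\mathbb{C}^\omega$ by $\xi^{(s)}_s=1$, $\xi^{(s)}_{\mu_n}=-h_{j_n s}$ for all $n$, and $\xi^{(s)}_t=0$ for $t\in S\setminus\{s\}$. Then $\{\xi^{(s_k)}\}_{k\in\omega}$ is a Schauder basis of $RNS(A)=\{y\in\mathbb{C}^\omega: Ay=0\}$ regarded as a subspace of the Fréchet space $\mathfrak{s}$: every $x\in RNS(A)$ satisfies $x=\sum_{k=0}^{\infty}x_{s_k}\xi^{(s_k)}$ with convergence in $\mathfrak{s}$, and if $x=\sum_{k=0}^\infty z_k\xi^{(s_k)}$ in $\mathfrak{s}$ for some scalars $z_k$, then $z_k=x_{s_k}$ for all $k$.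
   Context: $\omega=\{0,1,2,\dots\}$; $\mathbb{C}^\omega$ is the space of all complex sequences; $(Ay)_n=\sum_k a_{nk}y_k$. $\mathfrak{s}$ denotes $\mathbb{C}^\omega$ with the metric $\varrho(q,p)=\sum_{i\ge0}2^{-i}\frac{|q_i-p_i|}{1+|q_i-p_i|}$ (coordinatewise convergence). Row-finite: finitely many nonzero entries per row; nonsingular: invertible in the algebra of row-finite matrices. Length $\ell(x)$ of a finitely supported $x\neq0$: largest index of a nonzero coordinate. Quasi-Hermite form: with $J$ the indices of nonzero rows and $\ell_j=\ell(H_j)$, (i) $j<j'$ in $J$ implies $\ell_j<\ell_{j'}$; (ii) $h_{j\ell_j}=1$; (iii) $h_{m\ell_j}=0$ for all $m\neq j$. Deficiency: codimension of the row space of $A$ in the space of finitely supported sequences; it equals $\operatorname{card}(S)$. *)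

(* Defs.v *)
(* Complex scalars: an arbitrary numClosedFieldType C
   (an algebraically closed field with conjugation and norm, the MathComp
   abstraction of the complex numbers). *)
From HB Require Import structures.
From mathcomp Require Import all_boot all_order all_algebra.
Set Implicit Arguments. Unset Strict Implicit. Unset Printing Implicit Defensive.
Import Order.TTheory GRing.Theory Num.Theory.
Local Open Scope ring_scope.

Section Defs.
Variable C : numClosedFieldType.

Definition omat := nat -> nat -> C.
Definition oseq := nat -> C.

Definition supp_below (x : oseq) (N : nat) : Prop := forall k, (N <= k)%N -> x k = 0.
Definition fin_supp (x : oseq) : Prop := exists N, supp_below x N.

Definition row_finite (A : omat) : Prop := forall i, fin_supp (A i).

Definition mulv_at (A : omat) (y : oseq) (n : nat) (v : C) : Prop :=
  exists N, supp_below (A n) N /\ v = \sum_(k < N) A n k * y k.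

Definition RNS (A : omat) (y : oseq) : Prop := forall n, mulv_at A y n 0.

Definition is_prod (P M N : omat) : Prop :=
  forall i j, exists K, supp_below (M i) K /\ P i j = \sum_(k < K) M i k * N k j.

Definition idm : omat := fun i j => if i == j then 1 else 0.

Definition nonsingular (Q : omat) : Prop :=
  row_finite Q /\ exists R, row_finite R /\ is_prod idm R Q /\ is_prod idm Q R.

Definition is_length (x : oseq) (l : nat) : Prop :=
  x l != 0 /\ forall k, (l < k)%N -> x k = 0.

Definition quasi_hermite (H : omat) : Prop :=
  row_finite H /\
  forall j lj, is_length (H j) lj ->
    [/\ H j lj = 1,
        (forall m, m <> j -> H m lj = 0) &
        (forall j' lj', (j < j')%N -> is_length (H j') lj' -> (lj < lj')%N)].

Definition in_row_space (A : omat) (x : oseq) : Prop :=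
  exists (N : nat) (d : nat -> C), forall k, x k = \sum_(i < N) d i * A i k.

Definition infinite_deficiency (A : omat) : Prop :=
  forall n : nat, exists v : 'I_n -> oseq,
    (forall i, fin_supp (v i)) /\
    forall c : 'I_n -> C,
      in_row_space A (fun k => \sum_(i < n) c i * v i k) -> forall i, c i = 0.

Definition cvg (u : nat -> C) (l : C) : Prop :=
  forall eps : C, 0 < eps -> exists N, forall n, (N <= n)%N -> `|u n - l| < eps.

(* convergence in the Frechet space s = coordinatewise convergence *)
Definition cvg_s (u : nat -> oseq) (x : oseq) : Prop :=
  forall t, cvg (fun n => u n t) (x t).

End Defs.

(* Main.v *)
Require Import Defs.
From HB Require Import structures.
From mathcomp Require Import all_boot all_order all_algebra.
From Stdlib Require Import Classical.
From mathcomp Require Import zify.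
Import Order.TTheory GRing.Theory Num.Theory.
Local Open Scope ring_scope.

Set Implicit Arguments. Unset Strict Implicit.
Section Aux.
Variable C : numClosedFieldType.

Definition dot (a y : oseq C) (N : nat) : C := \sum_(k < N) a k * y k.

Lemma supp_mono (a : oseq C) N N' : supp_below a N -> (N <= N')%N -> supp_below a N'.
Proof. move=> h le k hk; apply: h; exact: leq_trans le hk. Qed.

Lemma dot_widen (a : oseq C) y N N' : supp_below a N -> (N <= N')%N -> dot a y N' = dot a y N.
Proof.
move=> h le; rewrite /dot -(subnKC le) big_split_ord /=.
rewrite [X in _ + X]big1 ?addr0 // => i _; rewrite h ?mul0r //.
exact: leq_addr.
Qed.

Lemma dot_ext (a : oseq C) y N N' : supp_below a N -> supp_below a N' -> dot a y N = dot a y N'.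
Proof.
move=> h h'; rewrite -(dot_widen y h (leq_maxl N N')) -(dot_widen y h' (leq_maxr N N')).
by [].
Qed.

Lemma bound_rows (b : nat -> oseq C) L :
  (forall l, (l < L)%N -> fin_supp (b l)) ->
  exists M, forall l, (l < L)%N -> supp_below (b l) M.
Proof.
elim: L => [|L IH] h; first by exists 0%N.
have [M hM] := IH (fun l hl => h l (leqW hl)).
have [N hN] := h L (ltnSn L).
exists (maxn M N) => l; rewrite ltnS leq_eqVlt => /orP[/eqP->|hl].
  exact: supp_mono hN (leq_maxr _ _).
exact: supp_mono (hM l hl) (leq_maxl _ _).
Qed.

Lemma lincomb (a : oseq C) (b : nat -> oseq C) (c v : nat -> C) L y N :
  (forall m, a m = \sum_(l < L) c l * b l m) ->
  (forall l, (l < L)%N -> exists Nl, supp_below (b l) Nl /\ dot (b l) y Nl = v l) ->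
  supp_below a N -> dot a y N = \sum_(l < L) c l * v l.
Proof.
move=> ha hb hN.
have [M hM] : exists M, forall l, (l < L)%N -> supp_below (b l) M.
  apply: bound_rows => l hl; have [Nl [h _]] := hb l hl; by exists Nl.
rewrite -(dot_widen y hN (leq_maxl N M)) /dot.
under eq_bigr => m _ do rewrite ha mulr_suml.
rewrite exchange_big /=; apply: eq_bigr => l _.
under eq_bigr => m _ do rewrite -mulrA.
rewrite -mulr_sumr; congr (_ * _).
have [Nl [h1 h2]] := hb l (ltn_ord l).
rewrite -h2 -(dot_ext y (supp_mono (hM l (ltn_ord l)) (leq_maxr N M)) h1).
by [].
Qed.

Lemma dot_idm i (f : oseq C) K : (i < K)%N -> dot (idm C i) f K = f i.
Proof.
move=> hi; rewrite /dot (bigD1 (Ordinal hi)) //= /idm eqxx mul1r big1 ?addr0 //.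
move=> k hk; case: eqP => [e|_]; last by rewrite mul0r.
by move: hk; rewrite -val_eqE /= e eqxx.
Qed.

Lemma dot_RNS (A : omat C) y n N : RNS A y -> supp_below (A n) N -> dot (A n) y N = 0.
Proof.
move=> h hN; have [N' [h1 h2]] := h n.
by rewrite (dot_ext y hN h1) /dot -h2.
Qed.

Lemma prod_dot (P M Nm : omat C) i j K : is_prod P M Nm -> supp_below (M i) K ->
  P i j = dot (M i) (fun k => Nm k j) K.
Proof. move=> h hK; have [K' [h1 ->]] := h i j; exact: (dot_ext (fun k => Nm k j) h1 hK). Qed.

Lemma RNS_AH (A Q H : omat C) y : row_finite Q -> row_finite A -> row_finite H ->
  is_prod H Q A -> RNS A y -> RNS H y.
Proof.
move=> rfQ rfA rfH hp hy n.
have [K hK] := rfQ n; have [N hN] := rfH n.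
exists N; split => //; symmetry.
rewrite -/(dot (H n) y N).
rewrite (@lincomb (H n) A (Q n) (fun=> 0) K y N) ?big1 //.
- by move=> i _; rewrite mulr0.
- by move=> m; rewrite (prod_dot m hp hK).
- move=> l _; have [Nl hNl] := rfA l; exists Nl; split => //; exact: dot_RNS.
Qed.

Lemma RNS_HA (A Q H : omat C) y : nonsingular Q -> row_finite A -> row_finite H ->
  is_prod H Q A -> RNS H y -> RNS A y.
Proof.
move=> [rfQ [R [rfR [pRQ _]]]] rfA rfH hp hy i.
have [L hL] := rfR i; have [N hN] := rfA i.
have pw : forall m, A i m = \sum_(l < L) R i l * H l m.
  move=> m; rewrite -(@dot_idm i (fun k => A k m) i.+1) //.
  apply: (@lincomb _ Q (R i) (fun l => H l m)).
  - by move=> k; rewrite (prod_dot k pRQ hL).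
  - move=> l _; have [Nl hNl] := rfQ l; exists Nl; split => //.
    by rewrite (prod_dot m hp hNl).
  - by move=> k hk; rewrite /idm; case: eqP => // e; move: hk; rewrite e ltnn.
exists N; split => //; symmetry.
rewrite -/(dot (A i) y N).
rewrite (@lincomb (A i) H (R i) (fun=> 0) L y N) ?big1 //.
- by move=> l _; rewrite mulr0.
- move=> l _; have [Nl hNl] := rfH l; exists Nl; split => //; exact: dot_RNS.
Qed.

Lemma cvg_ev (u : nat -> C) l : (exists N, forall n, (N <= n)%N -> u n = l) -> cvg u l.
Proof. move=> [N hN] eps he; exists N => n hn; by rewrite hN // subrr normr0. Qed.

Lemma cvg_ev_uniq (u : nat -> C) l c : cvg u l ->
  (exists N, forall n, (N <= n)%N -> u n = c) -> c = l.
Proof.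
move=> hc [N hN]; apply/eqP; rewrite -subr_eq0; apply/negPn/negP => hne.
have [M hM] := hc `|c - l| (ltac:(by rewrite normr_gt0)).
have := hM (maxn N M) (leq_maxr _ _); by rewrite hN ?leq_maxl // ltxx.
Qed.

Lemma len_uniq (f : oseq C) l1 l2 : is_length f l1 -> is_length f l2 -> l1 = l2.
Proof.
move=> [h1 z1] [h2 z2]; case: (ltngtP l1 l2) => // hl.
  by move: h2; rewrite z1 ?eqxx.
by move: h1; rewrite z2 ?eqxx.
Qed.

Lemma zero_or_len (f : oseq C) N : supp_below f N -> (forall k, f k = 0) \/ exists l, is_length f l.
Proof.
elim: N => [|N IH] h; first by left => k; apply: h.
case: (eqVneq (f N) 0) => hN.
  apply: IH => k; rewrite leq_eqVlt => /orP[/eqP<-//|]; exact: h.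
by right; exists N; split.
Qed.

Lemma pick_sum (F : nat -> C) a T :
  \sum_(u < T) (if (u : nat) == a then F u else 0) = if (a < T)%N then F a else 0.
Proof.
case: ltnP => ha.
  rewrite (bigD1 (Ordinal ha)) //= eqxx big1 ?addr0 // => u hu.
  by case: eqP => // e; move: hu; rewrite -val_eqE /= e eqxx.
rewrite big1 // => u _; case: eqP => // e.
by move: (ltn_ord u); rewrite e ltnNge ha.
Qed.

End Aux.

Unset Implicit Arguments.
Theorem theorem6 (C : numClosedFieldType) (A Q H : omat C)
  (s : nat -> nat) (xi : nat -> oseq C) :
  row_finite A ->
  infinite_deficiency A ->
  nonsingular Q ->
  is_prod H Q A ->
  quasi_hermite H ->
  (forall k, (s k < s k.+1)%N) ->
  (forall t, (exists k, s k = t) <-> ~ (exists j, is_length (H j) t)) ->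
  (forall k, xi (s k) (s k) = 1) ->
  (forall k j l, is_length (H j) l -> xi (s k) l = - H j (s k)) ->
  (forall k k', k <> k' -> xi (s k) (s k') = 0) ->
  (forall k, RNS A (xi (s k))) /\
  (forall x, RNS A x ->
     cvg_s (fun n => fun t => \sum_(k < n) x (s k) * xi (s k) t) x) /\
  (forall x (z : nat -> C), RNS A x ->
     cvg_s (fun n => fun t => \sum_(k < n) z k * xi (s k) t) x ->
     forall k, z k = x (s k)).
Proof.
move=> rfA _ nsQ hp [rfH qh] sinc hS hxs hxl hx0.
have rfQ : row_finite Q by case: nsQ.
have sge : forall k, (k <= s k)%N.
  elim=> // k IH; exact: leq_ltn_trans IH (sinc k).
have slt : forall k d, (s k < s (k + d.+1))%N.
  move=> k; elim=> [|d IH]; first by rewrite addn1 sinc.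
  by apply: (ltn_trans IH); rewrite (addnS k d.+1) sinc.
have sinj : forall k k', s k = s k' -> k = k'.
  move=> k k' e; case: (ltngtP k k') => // hk.
    move: (slt k (k' - k.+1)%N); have -> : (k + (k' - k.+1).+1 = k')%N by lia.
    by rewrite e ltnn.
  move: (slt k' (k - k'.+1)%N); have -> : (k' + (k - k'.+1).+1 = k)%N by lia.
  by rewrite e ltnn.
have nlen : forall k j, ~ is_length (H j) (s k).
  move=> k j hl; have := (proj1 (hS (s k))) (ex_intro _ k erefl); apply; by exists j.
have Hz : forall j lj m, is_length (H j) lj -> (lj < m)%N -> H j m = 0.
  by move=> j lj m [_ h] hm; apply: h.
have Hlen1 : forall j lj, is_length (H j) lj -> H j lj = 1.
  by move=> j lj hl; case: (qh j lj hl).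
have Hoth : forall j j' t, is_length (H j') t -> j <> j' -> H j t = 0.
  by move=> j j' t hl ne; case: (qh j' t hl) => _ h _; apply: h.
have classify : forall t, (exists k, s k = t) \/ (exists j, is_length (H j) t).
  move=> t; case: (classic (exists k, s k = t)) => h; [by left|right].
  by apply: NNPP => h'; apply: h; apply/hS.
have xsum : forall (w : nat -> C) m n, (m < n)%N ->
    \sum_(k < n) w k * xi (s k) (s m) = w m.
  move=> w m n hm; rewrite (bigD1 (Ordinal hm)) //= hxs mulr1 big1 ?addr0 //.
  move=> k hk; rewrite hx0 ?mulr0 // => e; move: hk; by rewrite -val_eqE /= e eqxx.
split.
  move=> k; apply: (RNS_HA (Q:=Q) (H:=H)) => //; last first.
  move=> j; have [N hN] := rfH j.
  case: (zero_or_len hN) => [hz|[lj hl]].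
    exists 0%N; split; first by move=> m _; apply: hz.
    by rewrite big_ord0.
  pose M := maxn lj.+1 (s k).+1.
  have hlM : (lj < M)%N by rewrite leq_maxl.
  have hsM : (s k < M)%N by rewrite leq_maxr.
  exists M; split.
    by move=> m hm; apply: (Hz j lj m hl); apply: leq_trans hm; rewrite leq_maxl.
  have ne : lj != s k by apply/eqP => e; apply: (nlen k j); rewrite -e.
  rewrite (bigD1 (Ordinal hlM)) //= (bigD1 (Ordinal hsM)) /=; last first.
    by rewrite -val_eqE /= eq_sym.
  rewrite big1.
    by rewrite (hxl k j lj hl) hxs (Hlen1 j lj hl) mul1r mulr1 addr0 addNr.
  move=> t /andP[h1 h2]; rewrite -val_eqE /= in h1 h2.
  case: (classify t) => [[k' ek]|[j' hj']].
    rewrite -ek hx0 ?mulr0 // => e; move/eqP: h2; apply; apply: val_inj => /=; rewrite e; exact: (esym ek).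
  have nej : j <> j'.
    move=> e; move: h1; rewrite e in hl; by rewrite (len_uniq hj' hl) eqxx.
  by rewrite (Hoth j j' t hj' nej) mul0r.
split.
  move=> x hx t; apply: cvg_ev.
  have hxH : RNS H x by exact: (RNS_AH rfQ rfA rfH hp hx).
  case: (classify t) => [[m <-]|[j hj]].
    by exists m.+1 => n hn; exact: (xsum (fun k => x (s k)) m n hn).
  exists t.+1 => n hn.
  have hsupp : supp_below (H j) t.+1 by move=> m hm; apply: (Hz j t m hj).
  have h0 := dot_RNS hxH hsupp.
  have tns : forall k, s k != t by move=> k; apply/eqP => e; apply: (nlen k j); rewrite e.
  have E : dot (H j) x t.+1 = x t + \sum_(k < n) H j (s k) * x (s k).
    rewrite /dot.
    have pw : forall u : 'I_t.+1, H j u * x u =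
        (if (u : nat) == t then x t else 0) +
        \sum_(k < n) (if (u : nat) == s k then H j (s k) * x (s k) else 0).
      move=> u; case: eqP => [eu|neu].
        rewrite eu (Hlen1 j t hj) mul1r big1 ?addr0 // => k _.
        by rewrite eq_sym (negbTE (tns k)).
      rewrite add0r; case: (classify u) => [[k' ek]|[j' hj']].
        have hk' : (k' < n)%N.
          apply: leq_ltn_trans (sge k') _; rewrite ek.
          exact: leq_trans (ltn_ord u) hn.
        rewrite (bigD1 (Ordinal hk')) //= -ek eqxx big1 ?addr0 // => k hk.
        case: eqP => // e; move: hk; rewrite -val_eqE /= (sinj _ _ e) eqxx //.
      have nej : j <> j'.
        move=> e; apply: neu; rewrite e in hj; exact: len_uniq hj' hj.
      rewrite (Hoth j j' u hj' nej) mul0r big1 // => k _.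
      case: eqP => // e; exfalso; apply: (nlen k j'); by rewrite -e.
    under eq_bigr => u _ do rewrite pw.
    rewrite big_split /= (pick_sum (fun=> x t)) ltnSn; congr (_ + _).
    rewrite exchange_big /=; apply: eq_bigr => k _.
    rewrite (pick_sum (fun u => H j (s k) * x (s k))).
    case: ltnP => // hk; rewrite (Hz j t (s k) hj hk) mul0r //.
  rewrite h0 in E.
  have -> : \sum_(k < n) x (s k) * xi (s k) t = - \sum_(k < n) H j (s k) * x (s k).
    rewrite -sumrN; apply: eq_bigr => k _; by rewrite (hxl k j t hj) mulrN mulrC.
  by apply/eqP; rewrite eq_sym -addr_eq0 -E.
move=> x z _ hc k.
apply: (cvg_ev_uniq (hc (s k))); exists k.+1 => n hn; exact: (xsum z k n hn).
Qed.
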